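(* Let $X$ be a topological space and let $\mathcal{A}(X)\subset C(X)$ be a family with the $D$-property. Assume that the activation function $\sigma:\mathbb{R}\to\mathbb{R}$ satisfies the univariate universal approximation property. Let $m\ge 1$. Then for every compact set $K\subset X$, every $g\in C(K;\mathbb{R}^m)$ and every $\varepsilon>0$ there exists $H\in\mathcal{N}_1^{(m)}(\sigma)$ with $\sup_{x\in K}\|g(x)-H(x)\|_{\mathbb{R}^m}<\varepsilon$. Consequently, for every $l\ge1$, the class $\mathcal{N}_l^{(m)}(\sigma)$ is dense in $C(X;\mathbb{R}^m)$ (i.e. for every compact $K\subset X$, the restrictions to $K$ of elements of $\mathcal{N}_l^{(m)}(\sigma)$ are dense in $C(K;\mathbb{R}^m)$ with respect to the uniform norm on $K$).
   Context: $C(X)$ denotes the continuous real-valued functions on $X$, and $C(X;\mathbb{R}^m)$ the continuous maps $X\to\mathbb{R}^m$, topologized by uniform convergence on compact sets (seminorms $\|g\|_K=\sup_{x\in K}\|g(x)\|_{\mathbb{R}^m}$, $K$ compact, Euclidean norm). A family $\mathcal{A}(X)\subset C(X)$ (the ''basic family'' of admissible feature maps) has the $D$-property if for every compact $K\subset X$, every $g\in C(K)$ and every $\varepsilon>0$ there exist $M\in\mathbb{N}$, $f_1,\dots,f_M\in\mathcal{A}(X)$ and $u_1,\dots,u_M\in C(\mathbb{R})$ with $\max_{x\in K}|g(x)-\sum_{i=1}^M u_i(f_i(x))|<\varepsilon$. An activation $\sigma:\mathbb{R}\to\mathbb{R}$ satisfies the univariate universal approximation property if for every compact interval $[a,b]$,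 every $u\in C([a,b])$ and every $\varepsilon>0$ there are $N$ and $c_j,w_j,\theta_j\in\mathbb{R}$ with $\sup_{t\in[a,b]}|u(t)-\sum_{j=1}^N c_j\sigma(w_jt-\theta_j)|<\varepsilon$. For $l\ge1$, $m\ge1$, $\mathcal{N}_l^{(m)}(\sigma)$ (deep topological feedforward neural networks of depth $l$ with $m$ outputs, built from $\mathcal{A}(X)$) is the set of all maps $H:X\to\mathbb{R}^m$ of the form $H=T_{l+1}\circ\sigma\circ T_l\circ\sigma\circ\cdots\circ T_1\circ\sigma\circ T_0$, where $T_0(x)=(w_1f_1(x)-\theta_1,\dots,w_{k_0}f_{k_0}(x)-\theta_{k_0})$ with $f_i\in\mathcal{A}(X)$, $w_i,\theta_i\in\mathbb{R}$; $T_j(y)=A_jy-b_j$ are affine maps $\mathbb{R}^{k_{j-1}}\to\mathbb{R}^{k_j}$ for $j=1,\dots,l$; $T_{l+1}(y)=A_{l+1}y-b_{l+1}$ is an affine map $\mathbb{R}^{k_l}\to\mathbb{R}^m$; and $\sigma$ acts componentwise. For $l=1$ this is the same as maps $H(x)=A\sigma(T(x))-b$ with $T(x)=(w_1f_1(x)-\theta_1,\dots,w_rf_r(x)-\theta_r)$, $f_i\in\mathcal{A}(X)$, $A\in\mathbb{R}^{m\times r}$, $b\in\mathbb{R}^m$ (single hidden layer networks, since intermediate affine layers may be taken trivial). *)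

(* Defs.v *)
From HB Require Import structures.
From mathcomp Require Import all_boot all_order all_algebra.
From mathcomp Require Import all_classical all_reals all_analysis.
Set Implicit Arguments. Unset Strict Implicit. Unset Printing Implicit Defensive.
Import Order.TTheory GRing.Theory Num.Theory.
Import numFieldNormedType.Exports.
Local Open Scope classical_set_scope.
Local Open Scope ring_scope.

Definition enorm {R : realType} {m : nat} (v : 'rV[R]_m) : R :=
  Num.sqrt (\sum_(i < m) v 0 i ^+ 2).

Definition unif_close1 {T : Type} {R : realType} (K : set T) (g h : T -> R)
  (eps : R) : Prop :=
  exists2 d : R, d < eps & forall x, K x -> `|g x - h x| <= d.

Definition unif_close {T : Type} {R : realType} {m : nat} (K : set T)
  (g h : T -> 'rV[R]_m) (eps : R) : Prop :=
  exists2 d : R, d < eps & forall x, K x -> enorm (g x - h x) <= d.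

Definition D_property {R : realType} {X : topologicalType} (A : set (X -> R)) : Prop :=
  forall K : set X, compact K ->
  forall g : X -> R, {within K, continuous g} ->
  forall eps : R, 0 < eps ->
  exists M : nat, exists f : 'I_M -> (X -> R), exists u : 'I_M -> (R -> R),
    (forall i, A (f i)) /\ (forall i, continuous (u i)) /\
    unif_close1 K g (fun x => \sum_(i < M) u i (f i x)) eps.

Definition univ_UAP {R : realType} (sigma : R -> R) : Prop :=
  forall a b : R, forall u : R -> R,
  {within [set t | a <= t <= b], continuous u} ->
  forall eps : R, 0 < eps ->
  exists N : nat, exists c w theta : 'I_N -> R,
    unif_close1 [set t | a <= t <= b] u
      (fun t => \sum_(j < N) c j * sigma (w j * t - theta j)) eps.

(* Pre-activation maps after l intermediate affine layers:
   level 0 : x |-> T_0(x) = (w_i f_i(x) - theta_i)_i, f_i in A;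
   level l+1 : x |-> sigma(Phi x) *m A - b, with Phi at level l. *)
Fixpoint preact {R : realType} {X : topologicalType} (A : set (X -> R))
  (sigma : R -> R) (l k : nat) : set (X -> 'rV[R]_k) :=
  match l with
  | 0 => [set Phi | exists f : 'I_k -> (X -> R), exists w theta : 'I_k -> R,
            (forall i, A (f i)) /\
            Phi = fun x => \row_i (w i * f i x - theta i)]
  | l'.+1 => [set Phi | exists k' : nat, exists Phi' : X -> 'rV[R]_k',
            @preact R X A sigma l' k' Phi' /\
            exists (M : 'M[R]_(k', k)) (b : 'rV[R]_k),
            Phi = fun x => map_mx sigma (Phi' x) *m M - b]
  end.

(* N_l^{(m)}(sigma): networks with l hidden (sigma) layers and m outputs,
   H = T_out o sigma o T_{l-1} o sigma o ... o T_1 o sigma o T_0  (l >= 1). *)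
Definition deep_net {R : realType} {X : topologicalType} (A : set (X -> R))
  (sigma : R -> R) (l m : nat) (H : X -> 'rV[R]_m) : Prop :=
  exists k : nat, exists Phi : X -> 'rV[R]_k,
    @preact R X A sigma l.-1 k Phi /\
    exists (M : 'M[R]_(k, m)) (b : 'rV[R]_m),
      H = fun x => map_mx sigma (Phi x) *m M - b.

(* Main.v *)
Require Import Defs.
From HB Require Import structures.
From mathcomp Require Import all_boot all_order all_algebra.
From mathcomp Require Import all_classical all_reals all_analysis.
From mathcomp Require Import lra.
Import Order.TTheory GRing.Theory Num.Theory.
Import numFieldNormedType.Exports.
Local Open Scope classical_set_scope.
Local Open Scope ring_scope.

Lemma preact_ex0 (R : realType) (X : topologicalType) (A : set (X -> R))
  (sigma : R -> R) l : exists Phi, @preact R X A sigma l 0 Phi.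
Proof.
elim: l => [|l [Phi HP]].
  eexists; exists (fun _ _ => 0), (fun _ => 0), (fun _ => 0); split.
    by case.
  reflexivity.
exists (fun x => map_mx sigma (Phi x) *m (0 : 'M[R]_(0, 0)) - 0).
by exists 0%N, Phi; split => //; exists 0, 0.
Qed.
Arguments preact_ex0 {R X A sigma}.

Lemma preact_const (R : realType) (X : topologicalType) (A : set (X -> R))
  (sigma : R -> R) l k (c : 'rV[R]_k) : @preact R X A sigma l.+1 k (fun _ => c).
Proof.
have [Phi HP] := @preact_ex0 R X A sigma l.
exists 0%N, Phi; split => //; exists 0, (-c).
by apply/funext => x; rewrite mulmx0 sub0r opprK.
Qed.
Arguments preact_const {R X A sigma}.

Lemma preact_lin (R : realType) (X : topologicalType) (A : set (X -> R))
  (sigma : R -> R) l k k' Phi (N : 'M[R]_(k, k')) c :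
  @preact R X A sigma l.+1 k Phi ->
  @preact R X A sigma l.+1 k' (fun x => Phi x *m N - c).
Proof.
move=> [k0 [P0 [HP [M [b ->]]]]].
exists k0, P0; split => //; exists (M *m N), (b *m N + c).
by apply/funext => x; rewrite mulmxBl mulmxA opprD addrA.
Qed.
Arguments preact_lin {R X A sigma l k k' Phi}.

Lemma preact_cat (R : realType) (X : topologicalType) (A : set (X -> R))
  (sigma : R -> R) l : forall k1 k2 P1 P2,
  @preact R X A sigma l k1 P1 -> @preact R X A sigma l k2 P2 ->
  @preact R X A sigma l (k1 + k2) (fun x => row_mx (P1 x) (P2 x)).
Proof.
elim: l => [|l IH] k1 k2 P1 P2.
  move=> [f1 [w1 [t1 [Hf1 ->]]]] [f2 [w2 [t2 [Hf2 ->]]]].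
  exists (fun i => match fintype.split i with inl a => f1 a | inr b => f2 b end),
    (fun i => match fintype.split i with inl a => w1 a | inr b => w2 b end),
    (fun i => match fintype.split i with inl a => t1 a | inr b => t2 b end); split.
    by move=> i; case: (fintype.split i).
  apply/funext => x; apply/rowP => i; rewrite [LHS]mxE.
  rewrite -[i]splitK; case: (fintype.split i) => j; rewrite unsplitK /=.
    have E : fintype.split (lshift k2 j) = inl j := unsplitK (inl j).
    by rewrite !mxE E.
  have E : fintype.split (rshift k1 j) = inr j := unsplitK (inr j).
  by rewrite !mxE E.
move=> [k1' [Q1 [HQ1 [M1 [b1 ->]]]]] [k2' [Q2 [HQ2 [M2 [b2 ->]]]]].
exists (k1' + k2')%N, (fun x => row_mx (Q1 x) (Q2 x)); split; first exact: IH.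
exists (block_mx M1 0 0 M2), (row_mx b1 b2).
apply/funext => x.
by rewrite map_row_mx mul_row_block !mulmx0 addr0 add0r opp_row_mx add_row_mx.
Qed.
Arguments preact_cat {R X A sigma l k1 k2 P1 P2}.

Lemma preact_add (R : realType) (X : topologicalType) (A : set (X -> R))
  (sigma : R -> R) l k P1 P2 :
  @preact R X A sigma l.+1 k P1 -> @preact R X A sigma l.+1 k P2 ->
  @preact R X A sigma l.+1 k (fun x => P1 x + P2 x).
Proof.
move=> H1 H2.
have := preact_lin (col_mx 1%:M 1%:M) 0 (preact_cat H1 H2).
have -> // : (fun x => row_mx (P1 x) (P2 x) *m col_mx 1%:M 1%:M - 0) =
  (fun x => P1 x + P2 x).
by apply/funext => x; rewrite mul_row_col !mulmx1 subr0.
Qed.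
Arguments preact_add {R X A sigma l k P1 P2}.

Lemma preact_sum (R : realType) (X : topologicalType) (A : set (X -> R))
  (sigma : R -> R) l k n (F : 'I_n -> X -> 'rV[R]_k) :
  (forall i, @preact R X A sigma l.+1 k (F i)) ->
  @preact R X A sigma l.+1 k (fun x => \sum_(i < n) F i x).
Proof.
elim: n F => [|n IH] F HF.
  have -> : (fun x => \sum_(i < 0) F i x) = fun _ => 0.
    by apply/funext => x; rewrite big_ord0.
  exact: preact_const.
have -> : (fun x => \sum_(i < n.+1) F i x) =
  fun x => \sum_(i < n) F (widen_ord (leqnSn n) i) x + F ord_max x.
  by apply/funext => x; rewrite big_ord_recr.
apply: preact_add; last exact: HF.
exact: (IH (fun i => F (widen_ord (leqnSn n) i))).
Qed.
Arguments preact_sum {R X A sigma}.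

Lemma bounded_within (X : topologicalType) (R : realType) (K : set X) (h : X -> R) :
  compact K -> {within K, continuous h} ->
  exists B : R, forall x, K x -> `|h x| <= B.
Proof.
move=> cK ch; have := compact_bounded (continuous_compact ch cK).
move=> [M [_ HM]]; exists (M + 1) => x Kx.
apply: (HM (M + 1)); first by rewrite ltrDl.
by exists x.
Qed.
Arguments bounded_within {X R K h}.

Lemma sum_sq_le (R : realType) n (F : 'I_n -> R) :
  \sum_(i < n) F i ^+ 2 <= (\sum_(i < n) `|F i|) ^+ 2.
Proof.
elim: n F => [|n IH] F; first by rewrite !big_ord0 expr2 mulr0.
rewrite !big_ord_recr /=.
have := IH (fun i => F (widen_ord (leqnSn n) i)) => /=.
have S0 : 0 <= \sum_(i < n) `|F (widen_ord (leqnSn n) i)| by apply: sumr_ge0.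
rewrite -(real_normK (num_real (F ord_max))).
have a0 : 0 <= `|F ord_max| by [].
move: S0 a0.
set S := \sum_(i < n) _; set T := \sum_(i < n) _; set a := `|_|.
move=> S0 a0 h; nra.
Qed.

Lemma enorm_le (R : realType) m (v : 'rV[R]_m) :
  enorm v <= \sum_(i < m) `|v 0 i|.
Proof.
rewrite /enorm.
have h0 : 0 <= \sum_(i < m) `|v 0 i| by apply: sumr_ge0.
rewrite -(ger0_norm h0) -sqrtr_sqr ler_sqrt ?sqr_ge0 //.
exact: sum_sq_le.
Qed.

Lemma approx_u (R : realType) (X : topologicalType) (A : set (X -> R))
  (sigma : R -> R) (K : set X) (f : X -> R) (u : R -> R) (e : R) :
  univ_UAP sigma -> compact K -> continuous f -> continuous u -> A f -> 0 < e ->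
  exists H, @preact R X A sigma 1 1 H /\ forall x, K x -> `|u (f x) - H x 0 0| <= e.
Proof.
move=> hs cK cf cu Af e0.
have [B HB] := bounded_within cK (continuous_subspaceT cf).
have [N [c [w [t [d dlt Hd]]]]] := hs (-B) B u (continuous_subspaceT cu) e e0.
exists (fun x => map_mx sigma (\row_j (w j * (fun=> f) j x - t j)) *m \col_j c j - 0); split.
  exists N, (fun x => \row_j (w j * (fun=> f) j x - t j)); split.
    by exists (fun _ => f), w, t.
  by exists (\col_j c j), 0.
move=> x Kx.
have fx : [set t | - B <= t <= B] (f x) by rewrite /= -ler_norml; exact: HB.
have := Hd _ fx => /= hx.
rewrite subr0 mxE; apply: le_trans (ltW dlt).
suff -> : \sum_j (map_mx sigma (\row_j0 (w j0 * f x - t j0))) 0 j * (\col_j0 c j0) j 0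
  = \sum_(j < N) c j * sigma (w j * f x - t j) by [].
by apply: eq_bigr => j _; rewrite !mxE mulrC.
Qed.

Lemma level1_scalar (R : realType) (X : topologicalType) (A : set (X -> R))
  (sigma : R -> R) (hAcont : forall f, A f -> continuous f)
  (hD : D_property A) (hs : univ_UAP sigma) (K : set X) (g : X -> R) (e : R) :
  compact K -> {within K, continuous g} -> 0 < e ->
  exists H, @preact R X A sigma 1 1 H /\ forall x, K x -> `|g x - H x 0 0| <= e.
Proof.
move=> cK cg e0.
have e20 : 0 < e / 2 by rewrite divr_gt0.
have [M [f [u [Af [cu [d dlt Hd]]]]]] := hD K cK g cg (e / 2) e20.
set e' := e / 2 / (M%:R + 1).
have M1 : 0 < M%:R + 1 :> R by rewrite ltr_wpDl.
have e'0 : 0 < e' by rewrite divr_gt0.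
have e'E : e' * (M%:R + 1) = e / 2 by rewrite /e' divfK // gt_eqF.
have Hi : forall i : 'I_M, exists H, @preact R X A sigma 1 1 H /\
    forall x, K x -> `|u i (f i x) - H x 0 0| <= e'.
  by move=> i; apply: approx_u => //; apply: hAcont.
have [Hs HHs] := choice Hi.
exists (fun x => \sum_(i < M) Hs i x); split.
  by apply: (@preact_sum R X A sigma 0%N) => i; exact: (HHs i).1.
move=> x Kx; rewrite summxE.
have -> : g x - \sum_(i < M) Hs i x 0 0 =
  (g x - \sum_(i < M) u i (f i x)) + \sum_(i < M) (u i (f i x) - Hs i x 0 0).
  by rewrite sumrB addrA subrK.
apply: le_trans (ler_normD _ _) _.
have h1 := Hd x Kx.
have h2 : `|\sum_(i < M) (u i (f i x) - Hs i x 0 0)| <= M%:R * e'.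
  apply: le_trans (ler_norm_sum _ _ _) _.
  have hs2 : \sum_(i < M) `|u i (f i x) - Hs i x 0 0| <= \sum_(i < M) e'.
    by apply: ler_sum => i _; exact: (HHs i).2.
  apply: le_trans hs2 _.
  by rewrite sumr_const card_ord mulr_natl.
move: h1 h2 dlt e'E e'0; set a := `|_|; set b := `|_|; move=> h1 h2 dlt e'E e'0.
nra.
Qed.

Lemma levelS_scalar (R : realType) (X : topologicalType) (A : set (X -> R))
  (sigma : R -> R) (hs : univ_UAP sigma) L (K : set X) :
  compact K ->
  (forall g : X -> R, {within K, continuous g} -> forall e, 0 < e ->
    exists H, @preact R X A sigma L.+1 1 H /\ forall x, K x -> `|g x - H x 0 0| <= e) ->
  (forall g : X -> R, {within K, continuous g} -> forall e, 0 < e ->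
    exists H, @preact R X A sigma L.+2 1 H /\ forall x, K x -> `|g x - H x 0 0| <= e).
Proof.
move=> cK IH g cg e e0.
have e20 : 0 < e / 2 by rewrite divr_gt0.
have [Bg HBg] := bounded_within cK cg.
have [psi [Hpsi Cpsi]] := IH g cg (e / 2) e20.
have cid : {within [set t | - (Bg + e / 2) <= t <= Bg + e / 2], continuous (fun t : R => t)}.
  by apply: continuous_subspaceT => t; exact: cvg_id.
have [N [c [w [t [d dlt Hd]]]]] := hs _ _ _ cid (e / 2) e20.
pose W : 'M[R]_(1, N) := \matrix_(i < 1, j < N) w j.
pose Th : 'rV[R]_N := \row_j t j.
exists (fun x => map_mx sigma (psi x *m W - Th) *m \col_j c j - 0); split.
  exists N, (fun x => psi x *m W - Th); split; first exact: preact_lin.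
  by exists (\col_j c j), 0.
move=> x Kx.
have E : (map_mx sigma (psi x *m W - Th) *m \col_j c j - 0) 0 0 =
    \sum_(j < N) c j * sigma (w j * psi x 0 0 - t j).
  rewrite subr0 mxE; apply: eq_bigr => j _.
  by rewrite !mxE big_ord1 !mxE mulrC (mulrC (psi x 0 0)).
rewrite E.
have hpx : [set t | - (Bg + e / 2) <= t <= Bg + e / 2] (psi x 0 0).
  rewrite /=; move: (HBg x Kx) (Cpsi x Kx); rewrite !ler_norml.
  move=> /andP[h1 h2] /andP[h3 h4]; apply/andP; split; lra.
have := Hd _ hpx => /= h.
have h2 := Cpsi x Kx.
have -> : g x - \sum_(j < N) c j * sigma (w j * psi x 0 0 - t j) =
  (g x - psi x 0 0) + (psi x 0 0 - \sum_(j < N) c j * sigma (w j * psi x 0 0 - t j)).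
  by rewrite addrA subrK.
apply: le_trans (ler_normD _ _) _.
move: h h2 dlt; set a := `|_|; set b := `|_|; move=> h h2 dlt; lra.
Qed.

Lemma scalar_all (R : realType) (X : topologicalType) (A : set (X -> R))
  (sigma : R -> R) (hAcont : forall f, A f -> continuous f)
  (hD : D_property A) (hs : univ_UAP sigma) L (K : set X) : compact K ->
  forall g : X -> R, {within K, continuous g} -> forall e, 0 < e ->
    exists H, @preact R X A sigma L.+1 1 H /\ forall x, K x -> `|g x - H x 0 0| <= e.
Proof.
move=> cK; elim: L => [|L IH].
  by move=> g cg e e0; apply: level1_scalar.
exact: levelS_scalar.
Qed.

Lemma vec_all (R : realType) (X : topologicalType) (A : set (X -> R))
  (sigma : R -> R) (hAcont : forall f, A f -> continuous f)
  (hD : D_property A) (hs : univ_UAP sigma) L m (K : set X) : compact K ->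
  forall g : X -> 'rV[R]_m, {within K, continuous g} -> forall eps : R, 0 < eps ->
  exists H, @preact R X A sigma L.+1 m H /\ unif_close K g H eps.
Proof.
move=> cK g cg eps eps0.
set e' := eps / 2 / (m%:R + 1).
have M1 : 0 < m%:R + 1 :> R by rewrite ltr_wpDl.
have e'0 : 0 < e' by rewrite divr_gt0 // divr_gt0.
have e'E : e' * (m%:R + 1) = eps / 2 by rewrite /e' divfK // gt_eqF.
have Hi : forall r : 'I_m, exists H, @preact R X A sigma L.+1 1 H /\
    forall x, K x -> `|g x 0 r - H x 0 0| <= e'.
  move=> r; apply: (@scalar_all R X A sigma hAcont hD hs L K cK) => //.
  move=> x; exact: (continuous_comp (cg x) (@coord_continuous R 1 m 0 r _)).
have [Hs HHs] := choice Hi.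
exists (fun x => \sum_(r < m) (Hs r x *m delta_mx 0 r - 0)); split.
  by apply: preact_sum => r; apply: preact_lin; exact: (HHs r).1.
have Ent : forall x r', (\sum_(r < m) (Hs r x *m delta_mx 0 r - 0)) 0 r' = Hs r' x 0 0.
  move=> x r'; rewrite summxE (bigD1 r') //= big1.
    by rewrite addr0 subr0 mxE big_ord1 mxE !eqxx mulr1.
  move=> r /negbTE nr; rewrite subr0 mxE big_ord1 mxE [r' == r]eq_sym nr andbF mulr0 //.
exists (eps / 2); first by rewrite ltr_pdivrMr // ltr_pMr // ltr1n.
move=> x Kx; apply: le_trans (@enorm_le R m _) _.
have hs2 : \sum_(r < m) `|(g x - \sum_(r0 < m) (Hs r0 x *m delta_mx 0 r0 - 0)) 0 r|
    <= \sum_(r < m) e'.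
  apply: ler_sum => r _; rewrite !mxE Ent; exact: (HHs r).2.
apply: le_trans hs2 _.
rewrite sumr_const card_ord -mulr_natl.
nra.
Qed.

Theorem theorem2p1 (R : realType) (X : topologicalType) (A : set (X -> R))
  (sigma : R -> R) (m : nat)
  (hAcont : forall f, A f -> continuous f)
  (hD : D_property A)
  (hsigma : univ_UAP sigma)
  (hm : (1 <= m)%N) :
  (forall K : set X, compact K ->
   forall g : X -> 'rV[R]_m, {within K, continuous g} ->
   forall eps : R, 0 < eps ->
   exists H : X -> 'rV[R]_m, @deep_net R X A sigma 1 m H /\ unif_close K g H eps)
  /\
  (forall l : nat, (1 <= l)%N ->
   forall K : set X, compact K ->
   forall g : X -> 'rV[R]_m, {within K, continuous g} ->
   forall eps : R, 0 < eps ->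
   exists H : X -> 'rV[R]_m, @deep_net R X A sigma l m H /\ unif_close K g H eps).
Proof.
have gen : forall L K, compact K -> forall g : X -> 'rV[R]_m, {within K, continuous g} ->
   forall eps : R, 0 < eps ->
   exists H : X -> 'rV[R]_m, @deep_net R X A sigma L.+1 m H /\ unif_close K g H eps.
  move=> L K cK g cg eps eps0.
  have [H [HH HC]] := @vec_all R X A sigma hAcont hD hsigma L m K cK g cg eps eps0.
  by exists H.
split; first exact: (gen 0%N).
by case=> // L _; exact: gen.
Qed.
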